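(* Let $\Bbbk$ be a field of characteristic zero, $n \geq 4$, $S=\Bbbk[x_1,\ldots,x_n]$. If $I\subset S$ is an artinian ideal minimally generated by $n+1$ quadratic monomials, then $S/I$ has the WLP.
   Context: A standard graded artinian algebra $A=\bigoplus_i A_i$ has the WLP if there is a linear form $\ell$ such that $\times\ell:A_k\to A_{k+1}$ has maximal rank (is injective or surjective) for every $k$; for monomial quotients $S/I$ this is equivalent to taking $\ell=x_1+\cdots+x_n$. *)

(* Defs.v *)
From mathcomp Require Import all_boot all_order all_algebra.
From mathcomp Require Import mpoly.
Set Implicit Arguments. Unset Strict Implicit. Unset Printing Implicit Defensive.
Import Order.TTheory GRing.Theory.
Local Open Scope ring_scope.

Definition in_ideal (F : fieldType) (n : nat) (J : finType)
  (p : J -> {mpoly F[n]}) (f : {mpoly F[n]}) : Prop :=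
  exists c : J -> {mpoly F[n]}, f = \sum_(j : J) c j * p j.

Definition minimal_gens (F : fieldType) (n : nat) (J : finType)
  (p : J -> {mpoly F[n]}) : Prop :=
  forall i : J,
    ~ (exists c : J -> {mpoly F[n]}, p i = \sum_(j : J | j != i) c j * p j).

(* A homogeneous ideal I (given as a membership predicate) has S/I artinian:
   the graded pieces (S/I)_d = S_d / I_d vanish for d large,
   i.e. every form of large degree lies in I. *)
Definition artinian (F : fieldType) (n : nat) (I : {mpoly F[n]} -> Prop) : Prop :=
  exists D : nat, forall d : nat, (D <= d)%N ->
    forall f : {mpoly F[n]}, f \is d.-homog -> I f.

(* x l : (S/I)_d -> (S/I)_{d+1} is injective, resp. surjective, unfolded on
   representatives (I homogeneous so (S/I)_d = S_d / (I ∩ S_d)). *)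
Definition mult_injective (F : fieldType) (n : nat) (I : {mpoly F[n]} -> Prop)
  (l : {mpoly F[n]}) (d : nat) : Prop :=
  forall f : {mpoly F[n]}, f \is d.-homog -> I (l * f) -> I f.

Definition mult_surjective (F : fieldType) (n : nat) (I : {mpoly F[n]} -> Prop)
  (l : {mpoly F[n]}) (d : nat) : Prop :=
  forall g : {mpoly F[n]}, g \is d.+1.-homog ->
    exists f : {mpoly F[n]}, f \is d.-homog /\ I (g - l * f).

Definition WLP (F : fieldType) (n : nat) (I : {mpoly F[n]} -> Prop) : Prop :=
  exists l : {mpoly F[n]}, l \is 1.-homog /\
    forall d : nat, mult_injective I l d \/ mult_surjective I l d.

(* Main.v *)
Require Import Defs.
From mathcomp Require Import all_boot all_order all_algebra.
From mathcomp Require Import mpoly.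
From mathcomp Require Import ring zify.
Set Implicit Arguments. Unset Strict Implicit. Unset Printing Implicit Defensive.
Import Order.TTheory GRing.Theory.
Local Open Scope ring_scope.

Section Abstract.
Variable F : fieldType.
Hypothesis F0 : [pchar F] =i pred0.
Variable T : lmodType F.
Variables (X Y : T -> T) (hom : nat -> T -> Prop) (m : nat).
Hypothesis XD : forall c1 c2, X (c1 + c2) = X c1 + X c2.
Hypothesis XZ : forall a c, X (a *: c) = a *: X c.
Hypothesis Y0 : Y 0 = 0.
Hypothesis homX : forall j c, hom j c -> hom j.+1 (X c).
Hypothesis homY : forall j c, hom j.+1 c -> hom j (Y c).
Hypothesis homY0 : forall c, hom 0 c -> Y c = 0.
Hypothesis comm : forall j c, hom j c ->
  Y (X c) = X (Y c) + (m%:R - j%:R - j%:R) *: c.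

Lemma iter_hom j k c : hom j c -> hom (j + k) (iter k X c).
Proof. move=> h; elim: k => [|k IH]; first by rewrite addn0. by rewrite addnS; apply: homX. Qed.

Lemma X0 : X 0 = 0.
Proof. by have := XZ 0 0; rewrite !scale0r. Qed.

Lemma iterX0 k : iter k X 0 = 0.
Proof. by elim: k => //= k ->; rewrite X0. Qed.

Lemma iterXZ k a c : iter k X (a *: c) = a *: iter k X c.
Proof. by elim: k => //= k ->; rewrite XZ. Qed.

Lemma comm_iter j k c : hom j c ->
  Y (iter k.+1 X c) = iter k.+1 X (Y c)
     + ((k.+1)%:R * (m%:R - j%:R - j%:R - k%:R)) *: iter k X c.
Proof.
move=> hc; elim: k => [|k IH].
  by rewrite /= (comm hc) mul1r subr0.
rewrite [iter k.+2 X c]/= (comm (iter_hom k.+1 hc)) IH XD XZ /= -addrA -scalerDl.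
congr (_ + _ *: _).
rewrite !natrD -[(k.+2)%N]addn2 -[(k.+1)%N]addn1 !natrD.
ring.
Qed.

Lemma coef_neq0 j r : (2 * j + r < m)%N ->
  ((r.+1)%:R * (m%:R - j%:R - j%:R - r%:R) : F) != 0.
Proof.
move=> h; rewrite -natrB; last by lia.
rewrite -natrB; last by lia.
rewrite -natrB; last by lia.
by rewrite -natrM ((pcharf0P F).1 F0) muln_eq0 negb_or; apply/andP; split; apply/eqP; lia.
Qed.

Lemma inj_iter j r c : hom j c -> (2 * j + r <= m)%N -> iter r X c = 0 -> c = 0.
Proof.
elim: j r c => [|j IHj] r c; elim: r c => [|r IHr] c hc hm hX //.
- have := comm_iter r hc; rewrite hX Y0 homY0 // iterX0 add0r => /esym/eqP.
  rewrite scaler_eq0 (negbTE (coef_neq0 _)) /=; last by lia.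
  by move/eqP; apply: IHr => //; lia.
- have e := comm_iter r hc; rewrite hX Y0 in e.
  have hY : iter r.+2 X (Y c) = 0.
    move/eqP: (e); rewrite eq_sym addr_eq0 => /eqP E.
    by rewrite iterS E -scaleNr XZ -iterS hX scaler0.
  have := IHj r.+2 (Y c) (homY hc) ltac:(lia) hY => Yc0.
  move: e; rewrite Yc0 iterX0 add0r => /esym/eqP.
  rewrite scaler_eq0 (negbTE (coef_neq0 _)) /=; last by lia.
  by move/eqP; apply: IHr => //; lia.
Qed.
End Abstract.

Section Dual.
Variable F : fieldType.

Lemma dual_surj (X Y : finType) (PX : pred X) (PY : pred Y) (M : X -> Y -> F) :
  (forall w : Y -> F, (forall x, x \in PX -> \sum_(y in PY) M x y * w y = 0) ->
     forall y, y \in PY -> w y = 0) ->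
  forall p : Y -> F, exists c : X -> F,
    forall y, y \in PY -> \sum_(x in PX) c x * M x y = p y.
Proof.
move=> H p.
pose A : 'M[F]_(#|PX|, #|PY|) := \matrix_(i, j) M (enum_val i) (enum_val j).
have frA : row_free A^T.
  rewrite -kermx_eq0; apply/rowV0P => v; rewrite sub_kermx => /eqP vA.
  pose w y := \sum_(j < #|PY|) (enum_val j == y)%:R * v 0 j.
  have wE j : w (enum_val j) = v 0 j.
    rewrite /w (bigD1 j) //= eqxx mul1r big1 ?addr0 // => k /negbTE kj.
    by rewrite (inj_eq enum_val_inj) kj mul0r.
  have := H w; rewrite -/w => Hw.
  apply/rowP => j; rewrite mxE -wE; apply: Hw; last exact: enum_valP.
  move=> x xP; rewrite big_enum_val.
  have := congr1 (fun B : 'rV_#|PX| => B 0 (enum_rank_in xP x)) vA.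
  rewrite !mxE => E; rewrite -[X in _ = X]E; apply: eq_bigr => k _.
  by rewrite wE !mxE enum_rankK_in // mulrC.
have fA : row_full A by rewrite /row_full -mxrank_tr.
pose pv : 'rV_#|PY| := \row_j p (enum_val j).
have /submxP [D pvE] : (pv <= A)%MS by apply: submx_full.
exists (fun x => \sum_(i < #|PX|) (enum_val i == x)%:R * D 0 i) => y yP.
have := congr1 (fun B : 'rV_#|PY| => B 0 (enum_rank_in yP y)) pvE.
rewrite !mxE enum_rankK_in // => ->.
rewrite big_enum_val; apply: eq_bigr => i _.
rewrite (bigD1 i) //= eqxx mul1r big1 ?addr0; last first.
  by move=> k /negbTE kj; rewrite (inj_eq enum_val_inj) kj mul0r.
by rewrite !mxE enum_rankK_in.
Qed.
End Dual.

Lemma sum_neq0 (F : nmodType) (I : finType) (A : pred I) (f : I -> F) :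
  \sum_(i in A) f i != 0 -> exists2 i, i \in A & f i != 0.
Proof.
case: (pickP [pred i in A | f i != 0]) => [i /andP [iA fi] _|h]; first by exists i.
by rewrite big1 ?eqxx // => i iA; move: (h i); rewrite /= iA /= => /negbFE /eqP.
Qed.

Section Bool.
Variable F : fieldType.
Variable K : finType.
Variable V : {set K}.
Local Notation fn := {ffun {set K} -> F^o}.
Local Notation m := #|V|.

Definition Lop (c : fn) : fn :=
  [ffun U : {set K} => if U \subset V then \sum_(i in U) c (U :\ i) else 0].
Definition Dop (c : fn) : fn :=
  [ffun T : {set K} => if T \subset V then \sum_(i in V :\: T) c (i |: T) else 0].
Definition homs j (c : fn) := forall T, c T != 0 -> (T \subset V) && (#|T| == j).
Definition homc j (c : fn) := forall T, c T != 0 -> (T \subset V) && (#|V :\: T| == j).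

Lemma LopD (c1 c2 : fn) : Lop (c1 + c2) = Lop c1 + Lop c2.
Proof.
apply/ffunP=> U; rewrite !ffunE; case: ifP => _; last by rewrite addr0.
by rewrite -big_split; apply: eq_bigr => i _; rewrite ffunE.
Qed.
Lemma LopZ (a : F) (c : fn) : Lop (a *: c) = a *: Lop c.
Proof.
apply/ffunP=> U; rewrite !ffunE; case: ifP => _; last by rewrite scaler0.
by rewrite scaler_sumr; apply: eq_bigr => i _; rewrite ffunE.
Qed.
Lemma DopD (c1 c2 : fn) : Dop (c1 + c2) = Dop c1 + Dop c2.
Proof.
apply/ffunP=> U; rewrite !ffunE; case: ifP => _; last by rewrite addr0.
by rewrite -big_split; apply: eq_bigr => i _; rewrite ffunE.
Qed.
Lemma DopZ (a : F) (c : fn) : Dop (a *: c) = a *: Dop c.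
Proof.
apply/ffunP=> U; rewrite !ffunE; case: ifP => _; last by rewrite scaler0.
by rewrite scaler_sumr; apply: eq_bigr => i _; rewrite ffunE.
Qed.
Lemma Lop0 : Lop 0 = 0.
Proof. by have := LopZ 0 0; rewrite !scale0r. Qed.
Lemma Dop0 : Dop 0 = 0.
Proof. by have := DopZ 0 0; rewrite !scale0r. Qed.

Lemma s1 (T : {set K}) i k : i \notin T -> k \in T -> (i |: T) :\ k = i |: (T :\ k).
Proof.
move=> iT kT; apply/setP => x; rewrite !inE.
by case: (eqVneq x i) => [->|//]; case: (eqVneq i k) => // ik; rewrite ik kT in iT.
Qed.

Lemma s2 (T : {set K}) k : k \in T -> T \subset V -> V :\: (T :\ k) = k |: (V :\: T).
Proof.
move=> kT /subsetP TV; apply/setP => x; rewrite !inE.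
case: (eqVneq x k) => [->|] /=; first by rewrite TV.
by rewrite andbC.
Qed.

Lemma s3 (T : {set K}) i : V :\: (i |: T) = (V :\: T) :\ i.
Proof. by apply/setP => x; rewrite !inE; case: (x == i); case: (x \in T); case: (x \in V). Qed.

Lemma comm_gen (c : fn) (T : {set K}) : T \subset V ->
  Dop (Lop c) T - Lop (Dop c) T = ((#|V :\: T|)%:R - (#|T|)%:R) * c T.
Proof.
move=> TV; rewrite !ffunE TV.
have -> : \sum_(i in V :\: T) Lop c (i |: T)
   = \sum_(i in V :\: T) (c T + \sum_(k in T) c ((i |: T) :\ k)).
  apply: eq_big => // i; rewrite inE => /andP [iT iV].
  rewrite ffunE subUset sub1set iV TV /= big_setU1 //= setU1K //.
have -> : \sum_(k in T) Dop c (T :\ k)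
   = \sum_(k in T) (c T + \sum_(i in V :\: T) c (i |: (T :\ k))).
  apply: eq_bigr => k kT; rewrite ffunE.
  have -> : T :\ k \subset V by apply: subset_trans TV; apply: subsetDl.
  by rewrite s2 // big_setU1 ?setD1K // !inE kT.
rewrite !big_split /= !sumr_const.
rewrite [X in _ + X - _]exchange_big /=.
have -> : \sum_(j in T) \sum_(i in V :\: T) c ((i |: T) :\ j)
        = \sum_(j in T) \sum_(i in V :\: T) c (i |: (T :\ j)).
  apply: eq_bigr => k kT; apply: eq_bigr => i; rewrite inE => /andP [iT _].
  by rewrite s1.
rewrite mulrBl !mulr_natl.
by rewrite opprD addrACA subrr addr0.
Qed.

Lemma fnD (f g : fn) T : (f + g) T = f T + g T.
Proof. by rewrite ffunE. Qed.
Lemma fnZ (a : F) (f : fn) T : (a *: f) T = a * f T.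
Proof. by rewrite ffunE. Qed.

Lemma homs_out j c (T : {set K}) : homs j c -> ~~ ((T \subset V) && (#|T| == j)) -> c T = 0.
Proof. by move=> h H; apply/eqP; apply: contraNT H; exact: h. Qed.

Lemma homc_out j c (T : {set K}) : homc j c -> ~~ ((T \subset V) && (#|V :\: T| == j)) -> c T = 0.
Proof. by move=> h H; apply/eqP; apply: contraNT H; exact: h. Qed.

Lemma homs_L j c : homs j c -> homs j.+1 (Lop c).
Proof.
move=> h U; rewrite ffunE; case: ifP => UV; last by rewrite eqxx.
move/sum_neq0 => [i iU /h /andP [_ /eqP cU]].
by rewrite /= (cardsD1 i U) iU cU add1n.
Qed.

Lemma homs_D j c : homs j.+1 c -> homs j (Dop c).
Proof.
move=> h T; rewrite ffunE; case: ifP => TV; last by rewrite eqxx.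
move/sum_neq0 => [i]; rewrite inE => /andP [iT iV] /h /andP [_ /eqP cT].
by move: cT; rewrite /= cardsU1 iT add1n => -[->].
Qed.

Lemma homs_D0 c : homs 0 c -> Dop c = 0.
Proof.
move=> h; apply/ffunP => T; rewrite !ffunE; case: ifP => // _.
apply: big1 => i _; apply: homs_out h _.
rewrite negb_and; apply/orP; right; rewrite cards_eq0; apply/set0Pn; exists i.
exact: setU11.
Qed.

Lemma homc_D j c : homc j c -> homc j.+1 (Dop c).
Proof.
move=> h T; rewrite ffunE; case: ifP => TV; last by rewrite eqxx.
move/sum_neq0 => [i iVT] /h /andP [_ /eqP cT].
by move: cT; rewrite /= s3 (cardsD1 i (V :\: T)) iVT add1n => ->.
Qed.

Lemma homc_L j c : homc j.+1 c -> homc j (Lop c).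
Proof.
move=> h U; rewrite ffunE; case: ifP => UV; last by rewrite eqxx.
move/sum_neq0 => [i iU /h /andP [_ /eqP cU]].
by move: cU; rewrite /= s2 // cardsU1 !inE iU /= add1n => -[->].
Qed.

Lemma homc_L0 c : homc 0 c -> Lop c = 0.
Proof.
move=> h; apply/ffunP => U; rewrite !ffunE; case: ifP => // UV.
apply: big1 => i iU; apply: homc_out h _.
rewrite negb_and; apply/orP; right; rewrite s2 // cards_eq0; apply/set0Pn; exists i.
exact: setU11.
Qed.

Lemma comm_s j c : homs j c -> Dop (Lop c) = Lop (Dop c) + (m%:R - j%:R - j%:R) *: c.
Proof.
move=> h; apply/ffunP => T; rewrite fnD fnZ.
case: (boolP (T \subset V)) => TV; last first.
  by rewrite !ffunE (negbTE TV) (homs_out h) ?(negbTE TV) // mulr0 addr0.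
have := comm_gen c TV; move/eqP; rewrite subr_eq => /eqP ->.
case: (eqVneq (c T) 0) => [->|/h /andP [_ /eqP cT]]; first by rewrite !mulr0 addrC addr0.
have jm : (j <= m)%N by rewrite -cT subset_leq_card.
rewrite cardsDS // cT natrB // addrC; congr (_ + _).
Qed.

Lemma comm_c j c : homc j c -> Lop (Dop c) = Dop (Lop c) + (m%:R - j%:R - j%:R) *: c.
Proof.
move=> h; apply/ffunP => T; rewrite fnD fnZ.
case: (boolP (T \subset V)) => TV; last first.
  by rewrite !ffunE (negbTE TV) (homc_out h) ?(negbTE TV) // mulr0 addr0.
have := comm_gen c TV; move/eqP; rewrite subr_eq addrC -subr_eq => /eqP <-.
case: (eqVneq (c T) 0) => [->|/h /andP [_ /eqP cT]]; first by rewrite !mulr0 subr0 addr0.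
have Tm : (#|T| <= m)%N by rewrite subset_leq_card.
move: cT; rewrite cardsDS // => cT.
have -> : #|T| = (m - j)%N by lia.
have jm : (j <= m)%N by lia.
rewrite !natrB //; last by lia.
congr (_ + _); ring.
Qed.

Hypothesis F0 : [pchar F] =i pred0.

Lemma injL j r c : homs j c -> (2 * j + r <= m)%N -> iter r Lop c = 0 -> c = 0.
Proof. exact: (inj_iter F0 LopD LopZ Dop0 homs_L homs_D homs_D0 comm_s). Qed.

Lemma injD j r c : homc j c -> (2 * j + r <= m)%N -> iter r Dop c = 0 -> c = 0.
Proof. exact: (inj_iter F0 DopD DopZ Lop0 homc_D homc_L homc_L0 comm_c). Qed.

Definition toggle (i : K) (T : {set K}) := if i \in T then T :\ i else i |: T.

Lemma toggleK i : involutive (toggle i).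
Proof.
move=> T; rewrite /toggle; case: (boolP (i \in T)) => iT.
  by rewrite setD11 setD1K.
by rewrite setU11 setU1K.
Qed.

Lemma adjoint (u w : fn) : \sum_S Lop u S * w S = \sum_T u T * Dop w T.
Proof.
have -> : \sum_S Lop u S * w S =
    \sum_(S : {set K}) \sum_(i : K) (if (S \subset V) && (i \in S) then u (S :\ i) * w S else 0).
  apply: eq_bigr => S _; rewrite ffunE; case: ifP => SV /=; last first.
    by rewrite mul0r big1.
  by rewrite mulr_suml big_mkcond.
have -> : \sum_T u T * Dop w T =
    \sum_(T : {set K}) \sum_(i : K) (if (T \subset V) && (i \in V :\: T) then u T * w (i |: T) else 0).
  apply: eq_bigr => T _; rewrite ffunE; case: ifP => TV /=; last first.
    by rewrite mulr0 big1.
  by rewrite mulr_sumr big_mkcond.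
rewrite exchange_big [RHS]exchange_big; apply: eq_bigr => i _.
rewrite (reindex_inj (can_inj (toggleK i))); apply: eq_bigr => T _.
rewrite /toggle; case: (boolP (i \in T)) => iT.
  by rewrite setD11 !inE iT /= !andbF.
rewrite subUset sub1set setU11 setU1K ?iT // !inE iT /=.
by case: (i \in V); case: (T \subset V).
Qed.

Definition delta (T : {set K}) : fn := [ffun S => (S == T)%:R].

Lemma surjL j (p : fn) : (0 < m)%N -> (m <= 2 * j + 1)%N -> homs j.+1 p ->
  exists u, homs j u /\ Lop u = p.
Proof.
move=> m0 mj hp.
pose PX := [pred T : {set K} | (T \subset V) && (#|T| == j)].
pose PY := [pred T : {set K} | (T \subset V) && (#|T| == j.+1)].
have HYP : forall w : {set K} -> F,
    (forall x, x \in PX -> \sum_(y in PY) Lop (delta x) y * w y = 0) ->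
    forall y, y \in PY -> w y = 0.
  move=> w hw U hU.
  pose W : fn := [ffun U => if U \in PY then w U else 0].
  have hWs : homs j.+1 W.
    move=> S; rewrite ffunE; case: ifP => [hS _|_]; last by rewrite eqxx.
    by move: hS; rewrite inE.
  have DW : Dop W = 0.
    apply/ffunP => T; rewrite [RHS]ffunE; case: (boolP (T \in PX)) => hT; last first.
      exact: (homs_out (homs_D hWs) hT).
    rewrite -(hw T hT) big_mkcond /=.
    have -> : \sum_U (if U \in PY then Lop (delta T) U * w U else 0)
       = \sum_U Lop (delta T) U * W U.
      by apply: eq_bigr => S _; rewrite [W S]ffunE; case: ifP => _; rewrite ?mulr0.
    rewrite adjoint (bigD1 T) //= [delta T T]ffunE eqxx mul1r big1 ?addr0 //.
    by move=> S /negbTE ST; rewrite [delta T S]ffunE ST mul0r.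
  have hU' := hU; move: hU'; rewrite inE => /andP [UV /eqP cU].
  have Um : (j.+1 <= m)%N by rewrite -cU subset_leq_card.
  have hWc : homc (m - j.+1)%N W.
    by move=> S /hWs /andP [SV /eqP cS]; rewrite SV /= cardsDS // cS.
  have W0 := injD (r := 1) hWc ltac:(lia) DW.
  by have := congr1 (fun f : fn => f U) W0; rewrite !ffunE hU.
have [c hc] := @dual_surj F _ _ PX PY (fun T U => Lop (delta T) U) HYP (fun U => p U).
pose u : fn := [ffun T => if T \in PX then c T else 0].
have hu : homs j u.
  move=> S; rewrite ffunE; case: ifP => [hS _|_]; last by rewrite eqxx.
  by move: hS; rewrite inE.
exists u; split => //.
have uE : u = \sum_(T in PX) c T *: delta T.
  apply/ffunP => S; rewrite sum_ffunE [u S]ffunE; case: ifP => hS.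
    rewrite (bigD1 S) //= fnZ [delta S S]ffunE eqxx mulr1 big1 ?addr0 //.
    by move=> T /andP [_ /negbTE TS]; rewrite fnZ [delta T S]ffunE eq_sym TS mulr0.
  rewrite big1 // => T hT; rewrite fnZ [delta T S]ffunE.
  by case: eqP => [ST|]; [rewrite ST hT in hS | rewrite mulr0].
apply/ffunP => U; case: (boolP (U \in PY)) => hU; last first.
  by rewrite (homs_out (homs_L hu) hU) (homs_out hp hU).
rewrite -hc // uE (big_morph Lop LopD Lop0) sum_ffunE; apply: eq_bigr => T _.
by rewrite LopZ ffunE.
Qed.

End Bool.

Section Delta.
Variable F : fieldType.
Hypothesis F0 : [pchar F] =i pred0.
Variable K : finType.
Variables a b : K.
Hypothesis ab : a != b.
Local Notation fn := {ffun {set K} -> F^o}.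
Definition VV : {set K} := ~: [set a; b].
Local Notation m := #|VV|.

Definition phi (c : fn) : fn := [ffun U : {set K} => \sum_(i in U) c (U :\ i)].
Definition allowed (T : {set K}) := ~~ ((a \in T) && (b \in T)).
Definition supp d (c : fn) := forall T : {set K}, c T != 0 -> allowed T && (#|T| == d).
Definition res (c : fn) : fn := [ffun T : {set K} => if T \subset VV then c T else 0].
Definition sh x (c : fn) : fn := [ffun T : {set K} => if T \subset VV then c (x |: T) else 0].

Lemma subVV (T : {set K}) : (T \subset VV) = (a \notin T) && (b \notin T).
Proof.
apply/subsetP/andP => [h|[aT bT] x xT].
  split; apply/negP => /h; rewrite !inE eqxx ?orbT //.
by rewrite !inE negb_or; apply/andP; split; apply/eqP => ex; [rewrite -ex xT in aT | rewrite -ex xT in bT].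
Qed.

Lemma aVV : a \notin VV. Proof. by rewrite !inE eqxx. Qed.
Lemma bVV : b \notin VV. Proof. by rewrite !inE eqxx orbT. Qed.

Lemma phi_add (x : K) (c : fn) (U : {set K}) : x \notin U ->
  phi c (x |: U) = c U + \sum_(i in U) c (x |: (U :\ i)).
Proof.
move=> xU; rewrite ffunE big_setU1 //= setU1K //; congr (_ + _).
by apply: eq_bigr => i iU; rewrite s1.
Qed.

Lemma Lop_res (c : fn) (U : {set K}) : U \subset VV -> Lop VV (res c) U = phi c U.
Proof.
move=> UV; rewrite !ffunE UV; apply: eq_bigr => i _; rewrite ffunE.
by have -> : U :\ i \subset VV by apply: subset_trans UV; apply: subsetDl.
Qed.

Lemma Lop_sh (x : K) (c : fn) (U : {set K}) : U \subset VV -> Lop VV (sh x c) U = \sum_(i in U) c (x |: (U :\ i)).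
Proof.
move=> UV; rewrite !ffunE UV; apply: eq_bigr => i _; rewrite ffunE.
by have -> : U :\ i \subset VV by apply: subset_trans UV; apply: subsetDl.
Qed.

Lemma phi_sh (x : K) (c : fn) (U : {set K}) : x \notin VV -> U \subset VV ->
  phi c (x |: U) = res c U + Lop VV (sh x c) U.
Proof.
move=> xV UV; rewrite Lop_sh // phi_add; last first.
  by apply: contra xV; apply: (subsetP UV).
by rewrite ffunE UV.
Qed.

Lemma homs_res d (c : fn) : supp d c -> homs VV d (res c).
Proof. by move=> h T; rewrite ffunE; case: ifP => [TV /h /andP [_ ->]|_]; rewrite ?eqxx. Qed.

Lemma homs_sh (x : K) d (c : fn) : x \notin VV -> supp d c -> homs VV d.-1 (sh x c).
Proof.
move=> xV h T; rewrite ffunE; case: ifP => [TV /h /andP [_ /eqP]|_]; last by rewrite eqxx.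
rewrite cardsU1; have -> : x \notin T by apply: contra xV; apply: (subsetP TV).
by move=> <-; apply: eqxx.
Qed.

Lemma fnN (f : fn) (T : {set K}) : (- f) T = - f T.
Proof. by rewrite ffunE. Qed.
Lemma fnB (f g : fn) (T : {set K}) : (f - g) T = f T - g T.
Proof. by rewrite !ffunE. Qed.

Lemma LopN (f : fn) : Lop VV (- f) = - Lop VV f.
Proof. by rewrite -scaleN1r LopZ scaleN1r. Qed.

Lemma allowed_sub (T : {set K}) : T \subset VV -> allowed T.
Proof. by rewrite subVV /allowed => /andP [/negbTE -> _]. Qed.

Lemma allowed_a (T : {set K}) : T \subset VV -> allowed (a |: T).
Proof.
rewrite subVV /allowed => /andP [_ bT]; rewrite !inE (negbTE bT) eq_sym.
by rewrite (negbTE ab) andbF.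
Qed.

Lemma allowed_b (T : {set K}) : T \subset VV -> allowed (b |: T).
Proof.
rewrite subVV /allowed => /andP [aT _]; rewrite !inE (negbTE aT).
by rewrite (negbTE ab).
Qed.

Lemma delta_inj d (c : fn) : (2 * d <= m)%N -> (2 <= m)%N -> supp d c ->
  (forall U, allowed U -> phi c U = 0) -> c = 0.
Proof.
move=> dm m2 hc hphi.
set u := res c; set v := sh a c; set w := sh b c.
have hu := homs_res hc; have hv := homs_sh aVV hc; have hw := homs_sh bVV hc.
have Lu : Lop VV u = 0.
  apply/ffunP => U; rewrite [RHS]ffunE; case: (boolP (U \subset VV)) => UV.
    by rewrite Lop_res // hphi // allowed_sub.
  by rewrite ffunE (negbTE UV).
have Lv : Lop VV v = - u.
  apply/ffunP => U; rewrite fnN; case: (boolP (U \subset VV)) => UV.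
    apply/eqP; rewrite -addr_eq0 addrC -phi_sh ?aVV //.
    by rewrite hphi ?allowed_a.
  by rewrite !ffunE (negbTE UV) oppr0.
have Lw : Lop VV w = - u.
  apply/ffunP => U; rewrite fnN; case: (boolP (U \subset VV)) => UV.
    apply/eqP; rewrite -addr_eq0 addrC -phi_sh ?bVV //.
    by rewrite hphi ?allowed_b.
  by rewrite !ffunE (negbTE UV) oppr0.
have v0 : v = 0.
  apply: (injL F0 (r := 2) hv); first by lia.
  by rewrite /= Lv LopN Lu oppr0.
have u0 : u = 0 by rewrite -[u]opprK -Lv v0 Lop0 oppr0.
have w0 : w = 0.
  apply: (injL F0 (r := 1) hw); first by lia.
  by rewrite /= Lw u0 oppr0.
apply/ffunP => T; rewrite ffunE; apply/eqP/negPn/negP => /[dup] cT /hc /andP [al _].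
move: al; rewrite /allowed.
case: (boolP (a \in T)) => aT /=.
  move=> bT; have TV : T :\ a \subset VV by rewrite subVV !inE eqxx /= (negbTE bT) andbF.
  have := congr1 (fun f : fn => f (T :\ a)) v0.
  by rewrite !ffunE TV setD1K // => /eqP; rewrite (negbTE cT).
case: (boolP (b \in T)) => bT _.
  have TV : T :\ b \subset VV by rewrite subVV !inE eqxx /= (negbTE aT) andbF.
  have := congr1 (fun f : fn => f (T :\ b)) w0.
  by rewrite !ffunE TV setD1K // => /eqP; rewrite (negbTE cT).
have TV : T \subset VV by rewrite subVV aT bT.
have := congr1 (fun f : fn => f T) u0.
by rewrite !ffunE TV => /eqP; rewrite (negbTE cT).
Qed.

Lemma homsB j (f g : fn) : homs VV j f -> homs VV j g -> homs VV j (f - g).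
Proof.
move=> hf hg T; rewrite fnB => h.
case: (eqVneq (f T) 0) => [fT|/hf //]; move: h; rewrite fT sub0r oppr_eq0; exact: hg.
Qed.

Lemma delta_surj d (p : fn) : (m + 1 <= 2 * d)%N -> (2 <= m)%N -> supp d.+1 p ->
  exists c, supp d c /\ forall U, allowed U -> phi c U = p U.
Proof.
move=> dm m2 hp.
have [u [hu Lu]] := surjL F0 (V := VV) (j := d) ltac:(lia) ltac:(lia) (homs_res hp).
case: d dm hp hu Lu => [|d] dm hp hu Lu; first by lia.
have hpa := homs_sh aVV hp; have hpb := homs_sh bVV hp.
have [v [hv Lv]] := surjL F0 (V := VV) (j := d) ltac:(lia) ltac:(lia) (homsB hpa hu).
have [w [hw Lw]] := surjL F0 (V := VV) (j := d) ltac:(lia) ltac:(lia) (homsB hpb hu).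
pose c : fn := [ffun T : {set K} => if a \in T then (if b \in T then 0 else v (T :\ a))
                         else if b \in T then w (T :\ b) else u T].
exists c; split.
  move=> T; rewrite ffunE /allowed.
  case: (boolP (a \in T)) => aT; case: (boolP (b \in T)) => bT /=; rewrite ?eqxx //.
  - move/hv => /andP [_ /eqP cT]; by rewrite (cardsD1 a T) aT cT.
  - move/hw => /andP [_ /eqP cT]; by rewrite (cardsD1 b T) bT cT.
  - by move/hu => /andP [_ ->].
move=> U; rewrite /allowed.
case: (boolP (a \in U)) => aU; case: (boolP (b \in U)) => bU //= _.
- have UV : U :\ a \subset VV by rewrite subVV !inE eqxx /= (negbTE bU) andbF.
  rewrite -{1}(setD1K aU) phi_add ?setD11 //.
  have := congr1 (fun f : fn => f (U :\ a)) Lv.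
  rewrite fnB [Lop VV v _]ffunE [sh a p _]ffunE UV setD1K // => e.
  have -> : \sum_(i in U :\ a) c (a |: ((U :\ a) :\ i)) = \sum_(i in U :\ a) v (U :\ a :\ i).
    apply: eq_bigr => i _.
    have bnot : b \notin a |: ((U :\ a) :\ i) by rewrite !inE (negbTE bU) !andbF orbF eq_sym.
    by rewrite ffunE setU11 (negbTE bnot) setU1K //; rewrite !inE eqxx /= ?andbF.
  have cU : c (U :\ a) = u (U :\ a) by rewrite ffunE !inE eqxx /= (negbTE bU) andbF.
  by rewrite cU e addrC subrK.
- have UV : U :\ b \subset VV by rewrite subVV !inE eqxx /= (negbTE aU) andbF.
  rewrite -{1}(setD1K bU) phi_add ?setD11 //.
  have := congr1 (fun f : fn => f (U :\ b)) Lw.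
  rewrite fnB [Lop VV w _]ffunE [sh b p _]ffunE UV setD1K // => e.
  have -> : \sum_(i in U :\ b) c (b |: ((U :\ b) :\ i)) = \sum_(i in U :\ b) w (U :\ b :\ i).
    apply: eq_bigr => i _.
    have anot : a \notin b |: ((U :\ b) :\ i) by rewrite !inE (negbTE aU) !andbF orbF.
    by rewrite ffunE setU11 (negbTE anot) setU1K //; rewrite !inE eqxx /= ?andbF.
  have cU : c (U :\ b) = u (U :\ b) by rewrite ffunE !inE eqxx /= (negbTE aU) andbF.
  by rewrite cU e addrC subrK.
- have UV : U \subset VV by rewrite subVV aU bU.
  have := congr1 (fun f : fn => f U) Lu; rewrite !ffunE UV => <-.
  apply: eq_bigr => i _.
  by rewrite ffunE !inE (negbTE aU) (negbTE bU) !andbF.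
Qed.
End Delta.

Section Poly.
Variable F : fieldType.
Variable n : nat.
Local Notation P := {mpoly F[n]}.

Lemma mcoeff_mulX (p : P) (m k : 'X_{1..n}) :
  (p * 'X_[m])@_k = if (m <= k)%MM then p@_(k - m)%MM else 0.
Proof.
case: ifP => h.
  by rewrite -{1}(submK h) addmC mcoeffMX.
apply: memN_msupp_eq0; apply/negP => H.
move: H; rewrite (perm_mem (msuppMX p m)) => /mapP [m' _ km].
by rewrite km lem_addr in h.
Qed.

Variable J : finType.
Variable g : J -> 'X_{1..n}.
Local Notation G := (fun j => 'X_[g j] : P).
Local Notation I := (in_ideal G).

Lemma inI0 : I 0.
Proof. by exists (fun _ => 0); rewrite big1 // => j _; rewrite mul0r. Qed.

Lemma inID f1 f2 : I f1 -> I f2 -> I (f1 + f2).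
Proof.
move=> [c1 ->] [c2 ->]; exists (fun j => c1 j + c2 j).
by rewrite -big_split; apply: eq_bigr => j _; rewrite mulrDl.
Qed.

Lemma inIM h f : I f -> I (h * f).
Proof.
move=> [c ->]; exists (fun j => h * c j).
by rewrite mulr_sumr; apply: eq_bigr => j _; rewrite mulrA.
Qed.

Lemma inIZ (a : F) f : I f -> I (a *: f).
Proof. by move=> If; rewrite -mul_mpolyC; apply: inIM. Qed.

Lemma inIX j m : (g j <= m)%MM -> I 'X_[m].
Proof.
move=> h; exists (fun k => if k == j then 'X_[m - g j] else 0).
rewrite (bigD1 j) //= eqxx big1 ?addr0; first by rewrite -mpolyXD submK.
by move=> k /negbTE ->; rewrite mul0r.
Qed.

Definition std (m : 'X_{1..n}) := [forall j, ~~ (g j <= m)%MM].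

Lemma inI_coef f : I f <-> (forall m, std m -> f@_m = 0).
Proof.
split.
  move=> [c ->] m /forallP sm; rewrite raddf_sum; apply: big1 => j _ /=.
  by rewrite mcoeff_mulX (negbTE (sm j)).
move=> h; rewrite (mpolyE f) big_seq.
apply: (big_ind I inI0 inID) => m _.
case: (boolP (std m)) => [/h -> |]; first by rewrite scale0r; exact: inI0.
by move/forallPn => [j /negPn gjm]; apply: inIZ; apply: inIX gjm.
Qed.
End Poly.

Section Mset.
Variable F : fieldType.
Variable n : nat.
Local Notation P := {mpoly F[n]}.

Definition mset (U : {set 'I_n}) : 'X_{1..n} := [multinom ((i \in U) : nat) | i < n].

Lemma msetE (U : {set 'I_n}) (i : 'I_n) : mset U i = (i \in U).
Proof. exact: mnmE. Qed.

Lemma mdeg_mset U : mdeg (mset U) = #|U|.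
Proof.
rewrite mdegE -sum1_card [RHS]big_mkcond /=; apply: eq_bigr => i _.
by rewrite msetE; case: (i \in U).
Qed.

Lemma mset_inj : injective mset.
Proof.
move=> U V /mnmP e; apply/setP => i; have := e i; rewrite !msetE.
by case: (i \in U); case: (i \in V).
Qed.

Lemma mset_sub (U : {set 'I_n}) (i : 'I_n) : i \in U -> (mset U - U_(i))%MM = mset (U :\ i).
Proof.
move=> iU; apply/mnmP => k; rewrite mnmBE !msetE mnm1E !inE.
case: (eqVneq i k) => [<-|ik]; rewrite ?iU ?eqxx //=.
by rewrite subn0.
Qed.

Lemma lep1_mset (U : {set 'I_n}) (i : 'I_n) : (U_(i) <= mset U)%MM = (i \in U).
Proof. by rewrite lep1mP msetE; case: (i \in U). Qed.

Definition ell : P := \sum_(i < n) 'X_i.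

Lemma ell_homog : ell \is 1.-homog.
Proof. by apply: rpred_sum => i _; rewrite dhomogX; apply/eqP; exact: mdeg1. Qed.

Lemma coef_lf (f : P) (U : {set 'I_n}) :
  (ell * f)@_(mset U) = \sum_(i in U) f@_(mset (U :\ i)).
Proof.
rewrite /ell mulr_suml raddf_sum [RHS]big_mkcond /=; apply: eq_bigr => i _.
by rewrite mulrC mcoeff_mulX lep1_mset; case: ifP => // iU; rewrite mset_sub.
Qed.
End Mset.

Section Two.
Variable n : nat.

Lemma two_of (m : 'X_{1..n}) : mdeg m = 2%N -> (forall i, m != (U_(i) *+ 2)%MM) ->
  exists a b, a != b /\ m = (U_(a) + U_(b))%MM.
Proof.
move=> dm nsq.
have [a ma] : exists a, m a != 0%N.
  case: (pickP (fun i => m i != 0%N)) => [a ma|none]; first by exists a.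
  have : (\sum_i m i = 0)%N by apply: big1 => i _; apply/eqP; exact: negbFE (none i).
  by rewrite -mdegE dm.
move: dm; rewrite mdegE (bigD1 a) //= => dm.
have /orP [ma2|ma1] : (m a == 2%N) || (m a == 1%N) by apply/orP; lia.
  exfalso; move: (nsq a) => /eqP; apply.
  move/eqP: ma2 => ma2; rewrite ma2 in dm.
  have z : (\sum_(i < n | i != a) m i == 0)%N.
    by move/eqP: dm; rewrite -{2}[2%N]addn0 eqn_add2l.
  move: z; rewrite sum_nat_eq0 => /forallP z.
  apply/mnmP => k; rewrite mulmnE mnm1E; case: eqVneq => [<-|ak]; first by lia.
  by have := z k; rewrite eq_sym ak /= => /eqP.
move/eqP: ma1 => ma1; rewrite ma1 in dm.
have [b /andP [ba mb]] : exists b, (b != a) && (m b != 0%N).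
  case: (pickP (fun i => (i != a) && (m i != 0%N))) => [b hb|none]; first by exists b.
  have : (\sum_(i < n | i != a) m i == 0)%N.
    rewrite sum_nat_eq0; apply/forallP => i; apply/implyP => ia.
    by move: (none i); rewrite ia /= => /negbFE.
  by move/eqP => e; rewrite e in dm.
move: dm; rewrite (bigD1 b) //= => dm.
have mb1 : m b = 1%N.
  move: mb dm; move: (m b) (\sum_(i < n | (i != a) && (i != b)) m i) => x y; lia.
have z : (\sum_(i < n | (i != a) && (i != b)) m i == 0)%N.
  move: dm; rewrite mb1; move: (\sum_(i < n | (i != a) && (i != b)) m i) => y; lia.
move: z; rewrite sum_nat_eq0 => /forallP z.
exists a, b; split; first by rewrite eq_sym.
apply/mnmP => k; rewrite mnmDE !mnm1E.
case: (eqVneq a k) => [<-|ak]; first by rewrite (negbTE ba) ma1.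
case: (eqVneq b k) => [<-|bk]; first by rewrite mb1.
by have := z k; rewrite eq_sym ak eq_sym bk /= => /eqP.
Qed.
End Two.

Section Cls.
Variable F : fieldType.
Variable n : nat.
Variable g : 'I_n.+1 -> 'X_{1..n}.
Local Notation G := (fun j => 'X_[g j] : {mpoly F[n]}).
Hypothesis hdeg : forall j, mdeg (g j) = 2%N.
Hypothesis hmin : minimal_gens G.
Hypothesis hart : artinian (in_ideal G).

Lemma ginj : injective g.
Proof.
move=> j k e; apply/eqP; apply/negPn/negP => jk.
have hm : forall i, ~ (exists c : 'I_n.+1 -> {mpoly F[n]}, 'X_[g i] = \sum_(j | j != i) c j * 'X_[g j]) := hmin.
case: (hm j); exists (fun i => if i == k then 1 else 0).
rewrite (bigD1 k) /=; last by rewrite eq_sym.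
rewrite eqxx mul1r big1 ?addr0 ?e // => i /andP [_ /negbTE ->].
by rewrite mul0r.
Qed.

Lemma le_sq (m : 'X_{1..n}) i e : (m <= U_(i) *+ e)%MM -> mdeg m = 2%N ->
  m = (U_(i) *+ 2)%MM.
Proof.
move=> /mnm_lepP le dm.
have zero k : k != i -> m k = 0%N.
  by move=> ki; have := le k; rewrite mulmnE mnm1E eq_sym (negbTE ki) mul0n leqn0 => /eqP.
have mi : m i = 2%N.
  by move: dm; rewrite mdegE (bigD1 i) //= big1 ?addn0 // => k; exact: zero.
apply/mnmP => k; rewrite mulmnE mnm1E; case: eqVneq => [<-|ik]; first by rewrite mi.
by rewrite zero // eq_sym.
Qed.

Lemma hsq i : exists j, g j = (U_(i) *+ 2)%MM.
Proof.
have [D hD] := hart.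
have hom : ('X_[U_(i) *+ (D + 2)] : {mpoly F[n]}) \is (D + 2).-homog.
  by rewrite dhomogX; apply/eqP; have := mdegMn (U_(i))%MM (D + 2); rewrite mdeg1 mul1n.
have := hD (D + 2)%N (leq_addr _ _) _ hom; move/inI_coef => h.
case: (boolP (std g (U_(i) *+ (D + 2))%MM)) => [/h|/forallPn [j /negPn gj]].
  by rewrite mcoeffX eqxx => /eqP; rewrite oner_eq0.
by exists j; apply: le_sq gj _.
Qed.

Definition sigma i := odflt ord0 [pick j | g j == (U_(i) *+ 2)%MM].

Lemma sigmaE i : g (sigma i) = (U_(i) *+ 2)%MM.
Proof.
rewrite /sigma; case: pickP => [j /eqP //|none].
by have [j hj] := hsq i; move: (none j); rewrite hj eqxx.
Qed.

Lemma sq_inj (i k : 'I_n) : (U_(i) *+ 2)%MM = (U_(k) *+ 2)%MM :> 'X_{1..n} -> i = k.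
Proof.
move/mnmP/(_ i); rewrite !mulmnE !mnm1E eqxx.
by case: eqVneq.
Qed.

Lemma sigma_inj : injective sigma.
Proof. by move=> i k /(congr1 g); rewrite !sigmaE => /sq_inj. Qed.

Lemma classify : exists a b : 'I_n, a != b /\ exists j0, g j0 = (U_(a) + U_(b))%MM /\
  forall j, j = j0 \/ exists i, j = sigma i.
Proof.
pose img := [set sigma i | i : 'I_n].
have cimg : #|img| = n by rewrite card_imset ?card_ord //; exact: sigma_inj.
have : #|~: img| = 1%N.
  have := cardsC img; rewrite cimg card_ord.
  move: #|~: img| => x; lia.
move=> /eqP /cards1P [j0 e].
have j0n : j0 \notin img by rewrite -in_setC e set11.
have nsq i : g j0 != (U_(i) *+ 2)%MM.
  apply/eqP; rewrite -sigmaE => /ginj ej; move: j0n; rewrite ej.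
  by rewrite imset_f.
have [a [b [ab gab]]] := two_of (hdeg j0) nsq.
exists a, b; split => //; exists j0; split => // j.
case: (boolP (j \in img)) => [/imsetP [i _ ->]|jn]; first by right; exists i.
by left; move: jn; rewrite -in_setC e => /set1P.
Qed.
End Cls.

Section Main.
Variable F : fieldType.
Variable n : nat.
Variable g : 'I_n.+1 -> 'X_{1..n}.
Variables a b : 'I_n.
Hypothesis ab : a != b.
Variable j0 : 'I_n.+1.
Hypothesis gj0 : g j0 = (U_(a) + U_(b))%MM.
Variable sg : 'I_n -> 'I_n.+1.
Hypothesis sgE : forall i, g (sg i) = (U_(i) *+ 2)%MM.
Hypothesis cover : forall j, j = j0 \/ exists i, j = sg i.
Local Notation G := (fun j => 'X_[g j] : {mpoly F[n]}).

Lemma std_iff m : std g m = [forall i, m i <= 1]%N && ~~ ((m a != 0%N) && (m b != 0%N)).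
Proof.
apply/idP/idP.
  move/forallP => h; apply/andP; split.
    apply/forallP => i; have := h (sg i); rewrite sgE; apply: contraR; rewrite -ltnNge => mi.
    apply/mnm_lepP => k; rewrite mulmnE mnm1E; case: eqVneq => [<-//|]; by rewrite mul0n.
  apply/negP => /andP [ma mb]; move: (h j0); rewrite gj0 => /negP; apply.
  apply/mnm_lepP => k; rewrite mnmDE !mnm1E.
  case: (eqVneq a k) => [<-|ak]; first by rewrite eq_sym (negbTE ab) /= addn0 lt0n.
  by case: (eqVneq b k) => [<-|bk] /=; rewrite ?lt0n.
move=> /andP [/forallP le1 nab]; apply/forallP => j.
case: (cover j) => [->|[i ->]].
  rewrite gj0; apply/negP => /mnm_lepP h; move: nab; rewrite -!lt0n.
  move: (h a) (h b); rewrite !mnmDE !mnm1E !eqxx (negbTE ab) (eq_sym b a) (negbTE ab) /=.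
  move: (m a) (m b) => x y; lia.
rewrite sgE; apply/negP => /mnm_lepP h; have := h i; have := le1 i.
rewrite mulmnE mnm1E eqxx; lia.
Qed.

Lemma std_mset U : std g (mset U) = allowed a b U.
Proof.
rewrite std_iff /allowed.
have -> : [forall i, (mset U i <= 1)%N] by apply/forallP => i; rewrite msetE; case: (i \in U).
by rewrite !msetE; case: (a \in U); case: (b \in U).
Qed.

Lemma Iset (f : {mpoly F[n]}) : in_ideal G f <-> (forall U, allowed a b U -> f@_(mset U) = 0).
Proof.
split.
  by move/inI_coef => h U aU; apply: h; rewrite std_mset.
move=> h; apply/inI_coef => m; rewrite std_iff => /andP [/forallP le1 nab].
have -> : m = mset [set i | m i != 0%N].
  apply/mnmP => i; rewrite msetE inE; have := le1 i.
  by case: (m i) => [|[|k]].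
apply: h; rewrite /allowed !inE.
by move: nab; case: (m a != 0%N); case: (m b != 0%N).
Qed.
End Main.

Unset Implicit Arguments.

Theorem lemma6p3 (F : fieldType) (n : nat) (g : 'I_n.+1 -> 'X_{1..n}) :
  [pchar F] =i pred0 ->
  (4 <= n)%N ->
  (forall j, mdeg (g j) = 2%N) ->
  minimal_gens (fun j => 'X_[g j] : {mpoly F[n]}) ->
  artinian (in_ideal (fun j => 'X_[g j] : {mpoly F[n]})) ->
  WLP (in_ideal (fun j => 'X_[g j] : {mpoly F[n]})).
Proof.
move=> F0 n4 hdeg hmin hart.
have [a [b [ab [j0 [gj0 cover]]]]] := classify hdeg hmin hart.
have Is := Iset (F := F) ab gj0 (sigmaE hdeg hart) cover.
have mE : #|VV a b| = (n - 2)%N.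
  rewrite /VV; have := cardsC [set a; b]; rewrite cards2 ab card_ord.
  move: #|~: _| => x; lia.
exists (ell F n); split; first exact: ell_homog.
move=> d; case: (leqP (2 * d) (n - 2)) => hd.
- left => f hf hlf; apply/Is => U aU.
  pose c : {ffun {set 'I_n} -> F^o} :=
    [ffun U => if allowed a b U then f@_(mset U) else 0].
  have sc : supp a b d c.
    move=> T; rewrite ffunE; case: ifP => [aT fT|_]; last by rewrite eqxx.
    rewrite ?aT /= -mdeg_mset; case: (eqVneq (mdeg (mset T)) d) => // ne.
    by rewrite (dhomog_nemf_coeff hf ne) eqxx in fT.
  have pc : forall V, allowed a b V -> phi c V = 0.
    move=> V aV; rewrite ffunE.
    have := (Is _).1 hlf V aV; rewrite coef_lf => e; rewrite -[X in _ = X]e.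
    apply: eq_bigr => i iV; rewrite ffunE.
    have -> : allowed a b (V :\ i).
      by move: aV; rewrite /allowed !inE; case: (a \in V); case: (b \in V); rewrite ?andbF.
    by [].
  have c0 := delta_inj F0 ab (d := d) (c := c) ltac:(rewrite mE; lia) ltac:(rewrite mE; lia) sc pc.
  by have := congr1 (fun h : {ffun {set 'I_n} -> F^o} => h U) c0; rewrite !ffunE aU.
- right => G' hG.
  pose p : {ffun {set 'I_n} -> F^o} :=
    [ffun U => if allowed a b U then G'@_(mset U) else 0].
  have sp : supp a b d.+1 p.
    move=> T; rewrite ffunE; case: ifP => [aT fT|_]; last by rewrite eqxx.
    rewrite ?aT /= -mdeg_mset; case: (eqVneq (mdeg (mset T)) d.+1) => // ne.
    by rewrite (dhomog_nemf_coeff hG ne) eqxx in fT.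
  have [c [sc pc]] := delta_surj F0 ab (d := d) (p := p) ltac:(rewrite mE; lia) ltac:(rewrite mE; lia) sp.
  exists (\sum_(U : {set 'I_n}) c U *: 'X_[mset U]); split.
    apply: rpred_sum => U _; case: (eqVneq (c U) 0) => [->|/sc /andP [_ /eqP cU]].
      by rewrite scale0r rpred0.
    by apply: dhomogZ; rewrite dhomogX; apply/eqP; rewrite -cU; exact: mdeg_mset.
  apply/Is => U aU.
  have coefS : forall V, (\sum_(U : {set 'I_n}) c U *: 'X_[mset U] : {mpoly F[n]})@_(mset V) = c V.
    move=> V; rewrite raddf_sum (bigD1 V) //= mcoeffZ mcoeffX eqxx mulr1 big1 ?addr0 //.
    by move=> W /negbTE WV; rewrite mcoeffZ mcoeffX (inj_eq (@mset_inj n)) WV mulr0.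
  rewrite mcoeffB coef_lf.
  under eq_bigr do rewrite coefS.
  by have := pc U aU; rewrite !ffunE aU => ->; rewrite subrr.
Qed.
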